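(* (Completeness) For every set $\Phi\subseteq\mathcal{L}_T$ and every $\alpha\in\mathcal{L}_T$: if $\Phi\models\alpha$, then $\Phi\vdash\alpha$ in SBTrust.
   Context: Propositional formulas: $\varphi::=\bot\mid p\mid\varphi\land\varphi\mid\varphi\lor\varphi\mid\varphi\to\varphi\mid\varphi\leftrightarrow\varphi\mid\neg\varphi$ over a countable set of variables. $\mathcal{L}_T$: $\alpha::=\varphi\mid\varphi\rightsquigarrow\varphi\mid B(\alpha)\mid\alpha*\alpha\mid\neg\alpha$ ($\varphi$ propositional, $*\in\{\land,\lor,\to,\leftrightarrow\}$). SBTrust is the Hilbert system (rule applications must yield formulas of $\mathcal{L}_T$; $\varphi,\psi,\chi,\varphi_i,\psi_i$ propositional; $\alpha,\beta\in\mathcal{L}_T$) with: all classical tautologies over $\mathcal{L}_T$ and Modus Ponens; $\mathbf{ID}$: $\varphi\rightsquigarrow\varphi$; $\mathbf{ST}$: $(\varphi\rightsquigarrow\bot)\to\neg\varphi$; $\mathbf{SH}$: $((\psi\land\chi)\rightsquigarrow\varphi)\to(\psi\rightsquigarrow(\chi\to\varphi))$; $\mathbf{LL+}$: $(\neg(\varphi\leftrightarrow\psi)\rightsquigarrow\bot)\to((\varphi\rightsquigarrow\chi)\leftrightarrow(\psi\rightsquigarrow\chi))$; rule $\mathbf{RCK}$: from $(\varphi_1\land\dots\land\varphi_n)\to\varphi_{n+1}$ infer $((\psi\rightsquigarrow\varphi_1)\land\dots\land(\psi\rightsquigarrow\varphi_n))\to(\psi\rightsquigarrow\varphi_{n+1})$;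 rule $\mathbf{S5_F}$: from $(\ell_1\land\dots\land\ell_n)\to\chi$ infer $(\ell_1\land\dots\land\ell_n)\to(\neg\chi\rightsquigarrow\bot)$, each $\ell_j$ being $\varphi_j\rightsquigarrow\psi_j$ or $\neg(\varphi_j\rightsquigarrow\psi_j)$, $\chi$ propositional; $\mathbf{KB}$: $B(\alpha\to\beta)\to(B(\alpha)\to B(\beta))$; $\mathbf{DB}$: $B(\alpha)\to\neg B(\neg\alpha)$; $\mathbf{4B}$: $B(\alpha)\to B(B(\alpha))$; necessitation for $B$. $\Phi\vdash\alpha$ is derivability from assumptions in the usual sense. A Trust model is $\mathcal{M}=\langle S,(S_i)_{i\in I},(\succeq_i)_{i\in I},R,V\rangle$: $R\subseteq S\times S$ serial and transitive; $(S_i)$ a partition of $S$; $\succeq_i\subseteq S_i\times S_i$ arbitrary; $V$ maps variables to subsets of $S$; and for each $i$ and propositional $\varphi$, $\|\varphi\|_i\neq\emptyset\Rightarrow\mathit{most}(\|\varphi\|_i)\neq\emptyset$, with $\|\varphi\|_i=\{v\in S_i:\mathcal{M},v\models\varphi\}$, $\mathit{most}(X)=\{s\in X:\forall v\in X\,(v\succeq_i s\Rightarrow s\succeq_i v)\}$. Truth: $s\models p$ iff $s\in V(p)$; Boolean clauses as usual; $s\models\varphi\rightsquigarrow\psi$ iff $\mathit{most}(\|\varphi\|_i)\subseteq\|\psi\|_i$ where $s\in S_i$; $s\models B(\alpha)$ iff $v\models\alpha$ for every $v$ with $sRv$. $\Phi\models\alpha$: in every Trust model, every state satisfying all of $\Phi$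 satisfies $\alpha$. *)

(* Defs.v *)
From Stdlib Require Import List.
Import ListNotations.

Inductive pform : Type :=
| PBot : pform
| PVar : nat -> pform
| PAnd : pform -> pform -> pform
| POr  : pform -> pform -> pform
| PImp : pform -> pform -> pform
| PIff : pform -> pform -> pform
| PNeg : pform -> pform.

(* Propositional formulas are embedded via [emb] below
   (so that each formula of L_T has a unique representation): the
   propositional constructors are shared with the L_T connectives. *)
Inductive tform : Type :=
| TBot : tform
| TVar : nat -> tform
| TAnd : tform -> tform -> tform
| TOr  : tform -> tform -> tform
| TImp : tform -> tform -> tform
| TIff : tform -> tform -> tform
| TNeg : tform -> tform
| TCond : pform -> pform -> tform
| TB : tform -> tform.

Fixpoint emb (p : pform) : tform :=
  match p with
  | PBot => TBot
  | PVar n => TVar n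
  | PAnd a b => TAnd (emb a) (emb b)
  | POr a b => TOr (emb a) (emb b)
  | PImp a b => TImp (emb a) (emb b)
  | PIff a b => TIff (emb a) (emb b)
  | PNeg a => TNeg (emb a)
  end.

Fixpoint pconj (x : pform) (l : list pform) : pform :=
  match l with
  | [] => x
  | y :: l' => PAnd x (pconj y l')
  end.

Fixpoint tconj (x : tform) (l : list tform) : tform :=
  match l with
  | [] => x
  | y :: l' => TAnd x (tconj y l')
  end.

Fixpoint teval (v : tform -> bool) (a : tform) : bool :=
  match a with
  | TBot => false
  | TVar _ => v a
  | TAnd x y => teval v x && teval v y
  | TOr x y => teval v x || teval v y
  | TImp x y => implb (teval v x) (teval v y)
  | TIff x y => Bool.eqb (teval v x) (teval v y)
  | TNeg x => negb (teval v x)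
  | TCond _ _ => v a
  | TB _ => v a
  end.

Definition tautology (a : tform) : Prop := forall v, teval v a = true.

Definition is_literal (l : tform) : Prop :=
  exists phi psi, l = TCond phi psi \/ l = TNeg (TCond phi psi).

Inductive Thm : tform -> Prop :=
| Thm_taut a : tautology a -> Thm a
| Thm_MP a b : Thm (TImp a b) -> Thm a -> Thm b
| Thm_ID phi : Thm (TCond phi phi)
| Thm_ST phi : Thm (TImp (TCond phi PBot) (TNeg (emb phi)))
| Thm_SH phi psi chi :
    Thm (TImp (TCond (PAnd psi chi) phi) (TCond psi (PImp chi phi)))
| Thm_LLp phi psi chi :
    Thm (TImp (TCond (PNeg (PIff phi psi)) PBot)
              (TIff (TCond phi chi) (TCond psi chi)))
| Thm_RCK psi phi1 phis phi' :
    Thm (emb (PImp (pconj phi1 phis) phi')) ->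
    Thm (TImp (tconj (TCond psi phi1) (map (TCond psi) phis)) (TCond psi phi'))
| Thm_S5F l1 ls chi :
    is_literal l1 -> Forall is_literal ls ->
    Thm (TImp (tconj l1 ls) (emb chi)) ->
    Thm (TImp (tconj l1 ls) (TCond (PNeg chi) PBot))
| Thm_KB a b : Thm (TImp (TB (TImp a b)) (TImp (TB a) (TB b)))
| Thm_DB a : Thm (TImp (TB a) (TNeg (TB (TNeg a))))
| Thm_4B a : Thm (TImp (TB a) (TB (TB a)))
| Thm_Nec a : Thm a -> Thm (TB a).

Inductive derivable (Phi : tform -> Prop) : tform -> Prop :=
| der_ass a : Phi a -> derivable Phi a
| der_thm a : Thm a -> derivable Phi a
| der_MP a b : derivable Phi (TImp a b) -> derivable Phi a -> derivable Phi b.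

Fixpoint psat {S : Type} (V : nat -> S -> Prop) (s : S) (p : pform) : Prop :=
  match p with
  | PBot => False
  | PVar n => V n s
  | PAnd a b => psat V s a /\ psat V s b
  | POr a b => psat V s a \/ psat V s b
  | PImp a b => psat V s a -> psat V s b
  | PIff a b => (psat V s a <-> psat V s b)
  | PNeg a => ~ psat V s a
  end.

(* ||phi||_i : states of the block S_i satisfying phi.  The partition
   (S_i)_{i in I} is given by the map [cls] sending a state to its block. *)
Definition ext {S I : Type} (cls : S -> I) (V : nat -> S -> Prop)
  (i : I) (phi : pform) (s : S) : Prop := cls s = i /\ psat V s phi.

(* most(X) w.r.t. the relation  pref i  (v >=_i s  is  pref i v s). *)
Definition most {S I : Type} (pref : I -> S -> S -> Prop) (i : I)
  (X : S -> Prop) (s : S) : Prop :=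
  X s /\ forall v, X v -> pref i v s -> pref i s v.

Record TrustModel : Type := {
  St : Type;
  Ix : Type;
  cls : St -> Ix;
  pref : Ix -> St -> St -> Prop;  (* only used on S_i x S_i *)
  Rel : St -> St -> Prop;
  Val : nat -> St -> Prop;
  Rel_serial : forall s, exists v, Rel s v;
  Rel_trans : forall s t u, Rel s t -> Rel t u -> Rel s u;
  most_nonempty : forall (i : Ix) (phi : pform),
      (exists s, ext cls Val i phi s) ->
      exists s, most pref i (ext cls Val i phi) s
}.

Fixpoint tsat (M : TrustModel) (s : St M) (a : tform) : Prop :=
  match a with
  | TBot => False
  | TVar n => Val M n s
  | TAnd x y => tsat M s x /\ tsat M s y
  | TOr x y => tsat M s x \/ tsat M s y
  | TImp x y => tsat M s x -> tsat M s y
  | TIff x y => (tsat M s x <-> tsat M s y)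
  | TNeg x => ~ tsat M s x
  | TCond phi psi =>
      forall v, most (pref M) (cls M s) (ext (cls M) (Val M) (cls M s) phi) v ->
                ext (cls M) (Val M) (cls M s) psi v
  | TB x => forall v, Rel M s v -> tsat M v x
  end.

Definition entails (Phi : tform -> Prop) (a : tform) : Prop :=
  forall (M : TrustModel) (s : St M),
    (forall b, Phi b -> tsat M s b) -> tsat M s a.

(* Main.v *)
From Stdlib Require Import List Classical ClassicalEpsilon FunctionalExtensionality PropExtensionality Cantor.
Import ListNotations.
Require Import Defs.

Ltac taut := intro; simpl; repeat match goal with |- context[teval ?v ?x] => destruct (teval v x) end; reflexivity.

Definition add (G : tform -> Prop) (c : tform) : tform -> Prop := fun b => b = c \/ G b.

Lemma der_mono (G H : tform -> Prop) a : (forall b, G b -> H b) -> derivable G a -> derivable H a.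
Proof. intros HGH D; induction D; [apply der_ass; auto| apply der_thm; auto| eapply der_MP; eauto]. Qed.

Lemma der_taut G a : tautology a -> derivable G a.
Proof. intros; apply der_thm, Thm_taut; auto. Qed.

Lemma der_mp_taut G a b : tautology (TImp a b) -> derivable G a -> derivable G b.
Proof. intros T D. apply der_MP with a; auto. apply der_taut; auto. Qed.

Lemma der_mp2_taut G a b c : tautology (TImp a (TImp b c)) -> derivable G a -> derivable G b -> derivable G c.
Proof. intros T D1 D2. apply der_MP with b; auto. apply der_MP with a; auto. apply der_taut; auto. Qed.

Lemma deduction G c a : derivable (add G c) a -> derivable G (TImp c a).
Proof.
  induction 1 as [a H|a H|a b D1 IH1 D2 IH2].
  - destruct H as [->|H].
    + apply der_taut; taut.
    + apply der_mp_taut with a; [taut| apply der_ass; auto].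
  - apply der_mp_taut with a; [taut| apply der_thm; auto].
  - apply der_mp2_taut with (TImp c (TImp a b)) (TImp c a); auto. taut.
Qed.

Lemma der_compact G a : derivable G a -> exists L, (forall b, In b L -> G b) /\ derivable (fun b => In b L) a.
Proof.
  induction 1 as [a H|a H|a b D1 IH1 D2 IH2].
  - exists [a]. split. intros b [<-|[]]; auto. apply der_ass; left; auto.
  - exists []. split. intros b []. apply der_thm; auto.
  - destruct IH1 as [L1 [H1 E1]], IH2 as [L2 [H2 E2]]. exists (L1 ++ L2). split.
    + intros c Hc; apply in_app_or in Hc; destruct Hc; auto.
    + apply der_MP with a; eapply der_mono; try eassumption; intros; apply in_or_app; auto.
Qed.

Fixpoint impchain (L : list tform) (a : tform) : tform :=
  match L with [] => a | b :: L' => TImp b (impchain L' a) end.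

Lemma impchain_eval v L a : ((forall b, In b L -> teval v b = true) -> teval v a = true) -> teval v (impchain L a) = true.
Proof.
  induction L as [|b L IH]; simpl; intro H.
  - apply H; intros _ [].
  - destruct (teval v b) eqn:Eb; simpl; auto. apply IH. intro H2; apply H. intros c [<-|Hc]; auto.
Qed.

Lemma impchain_eval2 v L a : teval v (impchain L a) = true -> (forall b, In b L -> teval v b = true) -> teval v a = true.
Proof.
  induction L as [|b L IH]; simpl; intros H1 H2; auto.
  rewrite (H2 b (or_introl eq_refl)) in H1. simpl in H1. apply IH; auto.
Qed.

Lemma der_list_imp L a : derivable (fun b => In b L) a -> Thm (impchain L a).
Proof.
  induction 1 as [a H|a H|a b D1 IH1 D2 IH2].
  - apply Thm_taut; intro v; apply impchain_eval; auto.
  - apply Thm_MP with a; auto. apply Thm_taut; intro v; simpl. destruct (teval v a) eqn:E; simpl; auto; try (apply impchain_eval; auto).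
  - apply Thm_MP with (impchain L a); auto. apply Thm_MP with (impchain L (TImp a b)); auto.
    apply Thm_taut; intro v; simpl.
    destruct (teval v (impchain L (TImp a b))) eqn:E1; simpl; auto.
    destruct (teval v (impchain L a)) eqn:E2; simpl; auto.
    apply impchain_eval; intro H.
    pose proof (impchain_eval2 _ _ _ E1 H) as X. pose proof (impchain_eval2 _ _ _ E2 H) as Y.
    simpl in X. rewrite Y in X. exact X.
Qed.

Lemma tconj_eval v l1 L : teval v (tconj l1 L) = true -> teval v l1 = true /\ forall b, In b L -> teval v b = true.
Proof.
  revert l1; induction L as [|b L IH]; simpl; intros l1 H.
  - split; [auto|intros _ []].
  - destruct (teval v l1); [|discriminate]. simpl in H. destruct (IH _ H) as [H1 H2].
    split; auto. intros c [<-|Hc]; auto.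
Qed.

Lemma der_list_tconj l1 L a : derivable (fun b => In b L) a -> Thm (TImp (tconj l1 L) a).
Proof.
  intro D. apply der_list_imp in D. apply Thm_MP with (impchain L a); auto.
  apply Thm_taut; intro v; simpl.
  destruct (teval v (impchain L a)) eqn:E1; simpl; auto.
  destruct (teval v (tconj l1 L)) eqn:E2; simpl; auto.
  apply tconj_eval in E2. destruct E2 as [_ E2]. eapply impchain_eval2; eauto.
Qed.

Definition cons (G : tform -> Prop) := ~ derivable G TBot.
Definition MCS (G : tform -> Prop) := cons G /\ forall a, G a \/ G (TNeg a).

Section M.
Variable G : tform -> Prop.
Hypothesis HG : MCS G.

Lemma mcs_der a : derivable G a -> G a.
Proof.
  intro D. destruct HG as [H1 H2]. destruct (H2 a); auto. exfalso; apply H1.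
  apply der_mp2_taut with a (TNeg a); [taut| auto | apply der_ass; auto].
Qed.
Lemma mcs_thm a : Thm a -> G a.
Proof. intro; apply mcs_der, der_thm; auto. Qed.
Lemma mcs_mp a b : G (TImp a b) -> G a -> G b.
Proof. intros; apply mcs_der; apply der_MP with a; apply der_ass; auto. Qed.
Lemma mcs_t1 a b : tautology (TImp a b) -> G a -> G b.
Proof. intros; apply mcs_der; apply der_mp_taut with a; auto; apply der_ass; auto. Qed.
Lemma mcs_t2 a b c : tautology (TImp a (TImp b c)) -> G a -> G b -> G c.
Proof. intros; apply mcs_der; apply der_mp2_taut with a b; auto; apply der_ass; auto. Qed.
Lemma mcs_bot : ~ G TBot.
Proof. intro H; destruct HG as [H1 _]; apply H1; apply der_ass; auto. Qed.
Lemma mcs_neg a : G (TNeg a) <-> ~ G a.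
Proof.
  split.
  - intros H1 H2. apply mcs_bot. apply (mcs_t2 a (TNeg a)); auto. taut.
  - intro H; destruct HG as [_ H2]; destruct (H2 a); tauto.
Qed.
Lemma mcs_imp a b : G (TImp a b) <-> (G a -> G b).
Proof.
  split; [intros; eapply mcs_mp; eauto|].
  intro H. destruct HG as [_ H2]; destruct (H2 a) as [Ha|Ha].
  - apply (mcs_t1 b); auto. taut.
  - apply (mcs_t1 (TNeg a)); auto. taut.
Qed.
Lemma mcs_and a b : G (TAnd a b) <-> G a /\ G b.
Proof.
  split.
  - intro H; split; [apply (mcs_t1 (TAnd a b))|apply (mcs_t1 (TAnd a b))]; auto; taut.
  - intros [H1 H2]; apply (mcs_t2 a b); auto; taut.
Qed.
Lemma mcs_or a b : G (TOr a b) <-> G a \/ G b.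
Proof.
  split.
  - intro H. destruct HG as [_ H2]; destruct (H2 a) as [Ha|Ha]; auto.
    right; apply (mcs_t2 (TOr a b) (TNeg a)); auto; taut.
  - intros [H1|H1]; [apply (mcs_t1 a)|apply (mcs_t1 b)]; auto; taut.
Qed.
Lemma mcs_iff a b : G (TIff a b) <-> (G a <-> G b).
Proof.
  split.
  - intro H; split; intro H1; [apply (mcs_t2 (TIff a b) a)|apply (mcs_t2 (TIff a b) b)]; auto; taut.
  - intros [H1 H2]. destruct HG as [_ H3]; destruct (H3 a) as [Ha|Ha].
    + apply (mcs_t2 a b); auto; taut.
    + assert (Hb : G (TNeg b)) by (apply mcs_neg; rewrite mcs_neg in Ha; tauto).
      apply (mcs_t2 (TNeg a) (TNeg b)); auto; taut.
Qed.
Lemma mcs_tconj l1 L : G l1 -> (forall b, In b L -> G b) -> G (tconj l1 L).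
Proof.
  revert l1; induction L as [|b L IH]; simpl; intros l1 H1 H2; auto.
  apply mcs_and; split; auto.
Qed.
End M.

Lemma cons_split C e : cons C -> ~ cons (add C e) -> cons (add C (TNeg e)).
Proof.
  unfold cons; intros H1 H2 H3. apply NNPP in H2. apply deduction in H2, H3.
  apply H1. apply der_mp2_taut with (TImp e TBot) (TImp (TNeg e) TBot); auto. taut.
Qed.

Lemma cons_notder C a : ~ derivable C a -> cons (add C (TNeg a)).
Proof.
  unfold cons; intros H1 H2. apply deduction in H2. apply H1.
  apply der_mp_taut with (TImp (TNeg a) TBot); auto. taut.
Qed.

Definition pr (a b : nat) : nat := to_nat (a, b).
Lemma pr_inj a b c d : pr a b = pr c d -> a = c /\ b = d.
Proof.
  unfold pr; intro H. assert (E : of_nat (to_nat (a,b)) = of_nat (to_nat (c,d))) by (rewrite H; auto).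
  rewrite !cancel_of_to in E. injection E; auto.
Qed.
Arguments pr : simpl never.

Fixpoint pcode (p : pform) : nat :=
  match p with
  | PBot => pr 0 0
  | PVar n => pr 1 n
  | PAnd a b => pr 2 (pr (pcode a) (pcode b))
  | POr a b => pr 3 (pr (pcode a) (pcode b))
  | PImp a b => pr 4 (pr (pcode a) (pcode b))
  | PIff a b => pr 5 (pr (pcode a) (pcode b))
  | PNeg a => pr 6 (pcode a)
  end.

Fixpoint tcode (p : tform) : nat :=
  match p with
  | TBot => pr 0 0
  | TVar n => pr 1 n
  | TAnd a b => pr 2 (pr (tcode a) (tcode b))
  | TOr a b => pr 3 (pr (tcode a) (tcode b))
  | TImp a b => pr 4 (pr (tcode a) (tcode b))
  | TIff a b => pr 5 (pr (tcode a) (tcode b))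
  | TNeg a => pr 6 (tcode a)
  | TCond a b => pr 7 (pr (pcode a) (pcode b))
  | TB a => pr 8 (tcode a)
  end.

Ltac inj_tac := repeat match goal with
  | H : pr _ _ = pr _ _ |- _ => apply pr_inj in H; destruct H
  end; try discriminate.

Lemma pcode_inj p q : pcode p = pcode q -> p = q.
Proof.
  revert q; induction p; destruct q; simpl; intro H; inj_tac; f_equal; auto.
Qed.

Lemma tcode_inj p q : tcode p = tcode q -> p = q.
Proof.
  revert q; induction p; destruct q; simpl; intro H; inj_tac; f_equal; auto; apply pcode_inj; auto.
Qed.

Definition enum (n : nat) : tform :=
  match excluded_middle_informative (exists a, tcode a = n) with
  | left H => proj1_sig (constructive_indefinite_description _ H)
  | right _ => TBot
  end.

Lemma enum_surj a : enum (tcode a) = a.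
Proof.
  unfold enum; destruct (excluded_middle_informative _) as [H|H].
  - destruct (constructive_indefinite_description _ H) as [b Hb]; simpl; apply tcode_inj; auto.
  - exfalso; apply H; eauto.
Qed.

Fixpoint chain (G : tform -> Prop) (n : nat) : tform -> Prop :=
  match n with
  | 0 => G
  | S n => fun b => chain G n b \/ (b = enum n /\ cons (add (chain G n) (enum n)))
                    \/ (b = TNeg (enum n) /\ ~ cons (add (chain G n) (enum n)))
  end.

Lemma chain_cons G n : cons G -> cons (chain G n).
Proof.
  intro H; induction n as [|n IH]; simpl; auto.
  destruct (classic (cons (add (chain G n) (enum n)))) as [C|C].
  - intro D; apply C; revert D; apply der_mono. intros b [Hb|[[-> _]|[_ Hb]]]; [right|left|]; tauto.
  - pose proof (cons_split _ _ IH C) as C2. intro D; apply C2; revert D; apply der_mono.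
    intros b [Hb|[[_ Hb]|[-> _]]]; [right|tauto|left]; auto.
Qed.

Lemma chain_mono G m n b : m <= n -> chain G m b -> chain G n b.
Proof. induction 1; simpl; auto. Qed.

Definition lim G : tform -> Prop := fun b => exists n, chain G n b.

Lemma lindenbaum G : cons G -> exists D, (forall a, G a -> D a) /\ MCS D.
Proof.
  intro HG. exists (lim G). split; [intros a Ha; exists 0; auto|split].
  - intro D. apply der_compact in D. destruct D as [L [HL D]].
    assert (Hn : exists n, forall b, In b L -> chain G n b).
    { clear D. induction L as [|c L IH].
      - exists 0; intros _ [].
      - destruct IH as [n Hn]. intros; apply HL; right; auto.
        destruct (HL c (or_introl eq_refl)) as [m Hm].
        exists (max n m). intros b [<-|Hb].
        + apply chain_mono with m; auto. apply PeanoNat.Nat.le_max_r.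
        + apply chain_mono with n; auto. apply PeanoNat.Nat.le_max_l. }
    destruct Hn as [n Hn]. apply (chain_cons G n HG). revert D; apply der_mono; auto.
  - intro a. rewrite <- (enum_surj a). set (n := tcode a).
    destruct (classic (cons (add (chain G n) (enum n)))) as [C|C].
    + left; exists (S n); simpl; auto.
    + right; exists (S n); simpl; auto.
Qed.

Definition lits (x : tform -> Prop) : tform -> Prop := fun a => x a /\ is_literal a.
Definition sameblk (y x : tform -> Prop) := forall phi psi, y (TCond phi psi) <-> x (TCond phi psi).
Definition sel (x : tform -> Prop) phi := forall th, x (TCond phi th) -> x (emb th).

Lemma idlit : is_literal (TCond PBot PBot).
Proof. exists PBot, PBot; left; auto. Qed.

Lemma blk_of_lits x y : MCS x -> MCS y -> (forall a, lits x a -> y a) -> sameblk y x.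
Proof.
  intros Hx Hy H phi psi. split; intro H1.
  - destruct (proj2 Hx (TCond phi psi)) as [H2|H2]; auto.
    exfalso. apply (proj1 (mcs_neg y Hy _) (H _ (conj H2 (ex_intro _ phi (ex_intro _ psi (or_intror eq_refl)))))); auto.
  - apply H; split; auto. exists phi, psi; left; auto.
Qed.

Lemma lits_of_blk x y : MCS x -> MCS y -> sameblk y x -> forall a, lits x a -> y a.
Proof.
  intros Hx Hy B a [Ha [phi [psi [->| ->]]]].
  - apply B; auto.
  - apply mcs_neg; auto. intro H; apply B in H. revert H; apply mcs_neg; auto.
Qed.

Section Blk.
Variable x : tform -> Prop.
Hypothesis Hx : MCS x.

Lemma S5 chi : derivable (lits x) (emb chi) -> x (TCond (PNeg chi) PBot).
Proof.
  intro D. apply der_compact in D. destruct D as [L [HL D]].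
  apply (der_list_tconj (TCond PBot PBot)) in D.
  assert (T := Thm_S5F (TCond PBot PBot) L chi idlit).
  assert (FL : Forall is_literal L) by (apply Forall_forall; intros b Hb; apply HL; auto).
  specialize (T FL D).
  apply (mcs_mp x Hx _ _ (mcs_thm x Hx _ T)).
  apply mcs_tconj; auto. apply mcs_thm; auto. apply Thm_ID. intros b Hb; apply HL; auto.
Qed.

Lemma glob_true y chi : MCS y -> y (TCond (PNeg chi) PBot) -> y (emb chi).
Proof.
  intros Hy H. pose proof (mcs_mp y Hy _ _ (mcs_thm y Hy _ (Thm_ST (PNeg chi))) H) as H2.
  simpl in H2. apply (mcs_t1 y Hy (TNeg (TNeg (emb chi)))); auto. taut.
Qed.

Lemma LLE phi phi' th : derivable (lits x) (emb (PIff phi phi')) ->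
  (x (TCond phi th) <-> x (TCond phi' th)).
Proof.
  intro D. apply S5 in D. apply (mcs_iff x Hx). eapply mcs_mp; eauto. apply mcs_thm; auto. apply Thm_LLp.
Qed.

Lemma RCK1 phi a b : Thm (emb (PImp a b)) -> x (TCond phi a) -> x (TCond phi b).
Proof.
  intros T H. pose proof (Thm_RCK phi a [] b T) as R. simpl in R.
  apply (mcs_mp x Hx _ _ (mcs_thm x Hx _ R)); auto.
Qed.

Lemma RCK2 phi a b c : Thm (emb (PImp (PAnd a b) c)) -> x (TCond phi a) -> x (TCond phi b) -> x (TCond phi c).
Proof.
  intros T H1 H2. pose proof (Thm_RCK phi a [b] c T) as R. simpl in R.
  apply (mcs_mp x Hx _ _ (mcs_thm x Hx _ R)). apply (mcs_and x Hx); auto.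
Qed.

Lemma Base phi psi : derivable (lits x) (emb psi) -> x (TCond phi psi).
Proof.
  intro D. apply (LLE phi (PAnd phi psi) psi).
  - apply der_mp_taut with (emb psi); auto. taut.
  - apply RCK1 with (PAnd phi psi). apply Thm_taut; taut. apply mcs_thm; auto. apply Thm_ID.
Qed.

Definition Gam phi : tform -> Prop := fun b => lits x b \/ exists chi, b = emb chi /\ x (TCond phi chi).

Lemma Dlem phi psi : derivable (Gam phi) (emb psi) -> x (TCond phi psi).
Proof.
  intro D. apply der_compact in D. destruct D as [L [HL D]].
  assert (D' : derivable (fun b => lits x b \/ In b L) (emb psi)) by (revert D; apply der_mono; auto).
  clear D. revert psi D'. induction L as [|b L IH]; intros psi D.
  - apply Base. revert D; apply der_mono. intros c [H|[]]; auto.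
  - destruct (HL b (or_introl eq_refl)) as [Hb|[chi [-> Hc]]].
    + apply IH. intros; apply HL; right; auto. revert D; apply der_mono.
      intros c [H|[<-|H]]; auto.
    + assert (E : x (TCond phi (PImp chi psi))).
      { apply IH. intros; apply HL; right; auto.
        apply deduction. revert D; apply der_mono. unfold add. intros c [H|[<-|H]]; auto. }
      apply RCK2 with chi (PImp chi psi); auto. apply Thm_taut; taut.
Qed.

Lemma witness phi psi : ~ x (TCond phi psi) ->
  exists y, MCS y /\ sameblk y x /\ sel y phi /\ ~ y (emb psi) /\ y (emb phi).
Proof.
  intro H. assert (C : cons (add (Gam phi) (TNeg (emb psi)))).
  { apply cons_notder. intro D; apply H; apply Dlem; auto. }
  destruct (lindenbaum _ C) as [y [Hsub Hy]].
  assert (B : sameblk y x).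
  { apply blk_of_lits; auto. intros a Ha; apply Hsub; right; left; auto. }
  assert (S : forall th, x (TCond phi th) -> y (emb th)).
  { intros th Hth; apply Hsub; right; right; exists th; auto. }
  exists y; split; [auto|split; [auto|split; [|split]]].
  - intros th Hth; apply S; apply B; auto.
  - apply (mcs_neg y Hy); apply Hsub; left; auto.
  - apply S. apply mcs_thm; auto. apply Thm_ID.
Qed.

Lemma glob_der chi : (forall y, MCS y -> sameblk y x -> y (emb chi)) -> derivable (lits x) (emb chi).
Proof.
  intro H. apply NNPP; intro D. apply cons_notder in D.
  destruct (lindenbaum _ D) as [y [Hsub Hy]].
  assert (B : sameblk y x) by (apply blk_of_lits; auto; intros a Ha; apply Hsub; right; auto).
  apply (proj1 (mcs_neg y Hy _) (Hsub _ (or_introl eq_refl))). apply H; auto.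
Qed.

Lemma chernoff y chi phi : MCS y -> sameblk y x -> sel y chi -> y (emb phi) ->
  (forall z, MCS z -> sameblk z x -> z (emb phi) -> z (emb chi)) -> sel y phi.
Proof.
  intros Hy By Sy Py H th Hth. apply By in Hth.
  assert (D : derivable (lits x) (emb (PImp phi chi))).
  { apply glob_der. intros z Hz Bz. simpl. apply (mcs_imp z Hz). apply H; auto. }
  assert (E : x (TCond (PAnd chi phi) th)).
  { apply (LLE phi (PAnd chi phi) th); auto. apply der_mp_taut with (emb (PImp phi chi)); auto. taut. }
  assert (F : x (TCond chi (PImp phi th))).
  { eapply mcs_mp; eauto. apply mcs_thm; auto. apply Thm_SH. }
  apply By in F. apply Sy in F. simpl in F. apply (mcs_mp y Hy _ _ F); auto.
Qed.
End Blk.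

Definition bad (x : tform -> Prop) phi := x (emb phi) /\ ~ sel x phi.

Record cstate : Type := mkC {
  w : tform -> Prop;
  fw : pform -> tform -> Prop;
  w_mcs : MCS w;
  fw_ok : forall phi, bad w phi -> MCS (fw phi) /\ sameblk (fw phi) w /\ fw phi (emb phi)
}.

Definition ccls (s : cstate) : pform -> pform -> Prop := fun phi psi => w s (TCond phi psi).
Definition beats (v s : cstate) := exists phi, bad (w s) phi /\ w v = fw s phi.
Definition cpref (i : pform -> pform -> Prop) (v s : cstate) := beats v s /\ ~ beats s v.
Definition cRel (s t : cstate) := forall b, w s (TB b) -> w t b.
Definition cVal (n : nat) (s : cstate) := w s (TVar n).

Lemma sameblk_refl x : sameblk x x.
Proof. intros p q; tauto. Qed.

Lemma sameblk_sym x y : sameblk x y -> sameblk y x.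
Proof. intros H p q; specialize (H p q); tauto. Qed.

Lemma sameblk_trans x y z : sameblk x y -> sameblk y z -> sameblk x z.
Proof. intros H1 H2 p q; specialize (H1 p q); specialize (H2 p q); tauto. Qed.

Definition copy (y : tform -> Prop) (Hy : MCS y) : cstate.
Proof.
  refine (mkC y (fun _ => y) Hy _).
  intros phi [H1 _]. split; [auto|split; [apply sameblk_refl|auto]].
Defined.

Lemma ccls_eq s t : sameblk (w s) (w t) -> ccls s = ccls t.
Proof.
  intro H. unfold ccls. apply functional_extensionality; intro p.
  apply functional_extensionality; intro q. apply propositional_extensionality. apply H.
Qed.

Lemma ccls_blk s t : ccls s = ccls t -> sameblk (w s) (w t).
Proof.
  intros H p q. change (ccls s p q <-> ccls t p q). rewrite H; tauto.
Qed.

Lemma psat_emb (s : cstate) phi : psat cVal s phi <-> w s (emb phi).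
Proof.
  pose proof (w_mcs s) as Hs.
  induction phi; simpl.
  - split; [tauto|]. apply mcs_bot; auto.
  - unfold cVal; tauto.
  - rewrite (mcs_and _ Hs). tauto.
  - rewrite (mcs_or _ Hs). tauto.
  - rewrite (mcs_imp _ Hs). tauto.
  - rewrite (mcs_iff _ Hs). tauto.
  - rewrite (mcs_neg _ Hs). tauto.
Qed.

Lemma B_chain x L a : MCS x -> x (TB (impchain L a)) -> (forall b, In b L -> x (TB b)) -> x (TB a).
Proof.
  intros Hx; revert a; induction L as [|b L IH]; simpl; intros a H1 H2; auto.
  apply IH; [|intros; apply H2; auto].
  assert (K := Thm_KB b (impchain L a)).
  apply (mcs_mp x Hx (TB b)); [|apply H2; auto].
  apply (mcs_mp x Hx _ _ (mcs_thm x Hx _ K)); auto.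
Qed.

Lemma B_der x a : MCS x -> derivable (fun b => x (TB b)) a -> x (TB a).
Proof.
  intros Hx D. apply der_compact in D. destruct D as [L [HL D]].
  apply der_list_imp in D. apply B_chain with L; auto.
  apply mcs_thm; auto. apply Thm_Nec; auto.
Qed.

Lemma B_cons x : MCS x -> cons (fun b => x (TB b)).
Proof.
  intros Hx D. apply B_der in D; auto.
  assert (H1 := mcs_mp x Hx _ _ (mcs_thm x Hx _ (Thm_DB TBot)) D).
  apply (proj1 (mcs_neg x Hx _) H1). apply mcs_thm; auto. apply Thm_Nec. apply Thm_taut; taut.
Qed.

Lemma cserial : forall s : cstate, exists v, cRel s v.
Proof.
  intro s. destruct (lindenbaum _ (B_cons _ (w_mcs s))) as [y [Hsub Hy]].
  exists (copy y Hy). intros b Hb; apply Hsub; auto.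
Qed.

Lemma ctrans : forall s t u : cstate, cRel s t -> cRel t u -> cRel s u.
Proof.
  intros s t u H1 H2 b Hb. apply H2, H1.
  apply (mcs_mp _ (w_mcs s) _ _ (mcs_thm _ (w_mcs s) _ (Thm_4B b))); auto.
Qed.

Lemma mincopy y chi : MCS y -> sel y chi ->
  exists v : cstate, w v = y /\ forall u, w u (emb chi) -> ~ beats u v.
Proof.
  intros Hy Sy.
  assert (E : forall phi, exists z, bad y phi -> MCS z /\ sameblk z y /\ z (emb phi) /\ ~ z (emb chi)).
  { intro phi. destruct (classic (bad y phi)) as [Hb|Hb]; [|exists y; tauto].
    destruct Hb as [Pp Np].
    apply NNPP; intro N. apply Np. apply (chernoff y Hy y chi phi); auto. apply sameblk_refl.
    intros z Hz Bz Pz. apply NNPP; intro Cz. apply N. exists z; auto. }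
  set (f := fun phi => proj1_sig (constructive_indefinite_description _ (E phi))).
  assert (Hf : forall phi, bad y phi -> MCS (f phi) /\ sameblk (f phi) y /\ f phi (emb phi) /\ ~ f phi (emb chi)).
  { intro phi; unfold f; destruct (constructive_indefinite_description _ (E phi)); simpl; auto. }
  assert (Hf2 : forall phi, bad y phi -> MCS (f phi) /\ sameblk (f phi) y /\ f phi (emb phi)).
  { intros phi Hb; destruct (Hf phi Hb) as [? [? [? ?]]]; auto. }
  exists (mkC y f Hy Hf2). split; [auto|].
  intros u Hu [phi [Hb Eu]]. simpl in *. destruct (Hf phi Hb) as [_ [_ [_ N]]].
  apply N. rewrite <- Eu. auto.
Qed.

Lemma nonmin (s : cstate) chi : bad (w s) chi ->
  exists u : cstate, w u (emb chi) /\ sameblk (w u) (w s) /\ beats u s /\ ~ beats s u.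
Proof.
  intro Hb. set (x := w s). set (x' := fw s chi).
  pose proof (w_mcs s) as Hx.
  destruct (fw_ok s chi Hb) as [Hx' [Bx' Px']].
  assert (E : forall phi, exists z, bad x' phi -> MCS z /\ sameblk z x' /\ z (emb phi) /\ z <> x).
  { intro phi. destruct (classic (bad x' phi)) as [Hb'|Hb']; [|exists x'; tauto].
    destruct (classic (x' = x)) as [Eq|Neq]; [|exists x'; intros _; split; [auto|split; [apply sameblk_refl|split; [destruct Hb'; auto|auto]]]].
    destruct Hb' as [Pp Np].
    assert (Nb : ~ x' (TCond phi PBot)).
    { intro H. pose proof (mcs_mp _ Hx' _ _ (mcs_thm _ Hx' _ (Thm_ST phi)) H) as H2.
      apply (proj1 (mcs_neg _ Hx' _) H2); auto. }
    destruct (witness x' Hx' phi PBot Nb) as [z [Hz [Bz [Sz [_ Pz]]]]].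
    exists z; intros _. split; [auto|split; [auto|split; [auto|]]].
    intro Ez. apply Np. rewrite Eq. rewrite <- Ez. auto. }
  set (f := fun phi => proj1_sig (constructive_indefinite_description _ (E phi))).
  assert (Hf : forall phi, bad x' phi -> MCS (f phi) /\ sameblk (f phi) x' /\ f phi (emb phi) /\ f phi <> x).
  { intro phi; unfold f; destruct (constructive_indefinite_description _ (E phi)); simpl; auto. }
  assert (Hf2 : forall phi, bad x' phi -> MCS (f phi) /\ sameblk (f phi) x' /\ f phi (emb phi)).
  { intros phi Hb'; destruct (Hf phi Hb') as [? [? [? ?]]]; auto. }
  exists (mkC x' f Hx' Hf2). simpl. split; [auto|split; [auto|split]].
  - exists chi; split; auto.
  - intros [phi [Hb' Ex]]. simpl in *. destruct (Hf phi Hb') as [_ [_ [_ N]]]. apply N; auto.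
Qed.

Lemma cmost : forall (i : pform -> pform -> Prop) (phi : pform),
  (exists s, ext ccls cVal i phi s) -> exists s, most cpref i (ext ccls cVal i phi) s.
Proof.
  intros i phi [s0 [Ci Ps]]. apply psat_emb in Ps. pose proof (w_mcs s0) as Hx.
  assert (Nb : ~ w s0 (TCond phi PBot)).
  { intro H. pose proof (mcs_mp _ Hx _ _ (mcs_thm _ Hx _ (Thm_ST phi)) H) as H2.
    apply (proj1 (mcs_neg _ Hx _) H2); auto. }
  destruct (witness _ Hx phi PBot Nb) as [y [Hy [By [Sy [_ Py]]]]].
  destruct (mincopy y phi Hy Sy) as [v [Ev Mv]].
  exists v. split.
  - split.
    + rewrite <- Ci. apply ccls_eq. rewrite Ev; auto.
    + apply psat_emb. rewrite Ev; auto.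
  - intros u [_ Pu] [Bu _]. exfalso. apply psat_emb in Pu. apply (Mv u Pu Bu).
Qed.

Definition CM : TrustModel :=
  {| St := cstate; Ix := pform -> pform -> Prop; cls := ccls; pref := cpref;
     Rel := cRel; Val := cVal; Rel_serial := cserial; Rel_trans := ctrans;
     most_nonempty := cmost |}.

Lemma truth : forall a (s : cstate), tsat CM s a <-> w s a.
Proof.
  induction a as [| n | a IHa b IHb | a IHa b IHb | a IHa b IHb | a IHa b IHb | a IHa | phi psi | a IHa];
    intro s; pose proof (w_mcs s) as Hs; simpl.
  - split; [tauto|]. apply mcs_bot; auto.
  - unfold cVal; tauto.
  - rewrite (mcs_and _ Hs), IHa, IHb; tauto.
  - rewrite (mcs_or _ Hs), IHa, IHb; tauto.
  - rewrite (mcs_imp _ Hs), IHa, IHb; tauto.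
  - rewrite (mcs_iff _ Hs), IHa, IHb; tauto.
  - rewrite (mcs_neg _ Hs), IHa; tauto.
  - split.
    + intro H. apply NNPP; intro N.
      destruct (witness _ Hs phi psi N) as [y [Hy [By [Sy [Ny Py]]]]].
      destruct (mincopy y phi Hy Sy) as [v [Ev Mv]].
      assert (Cv : ccls v = ccls s) by (apply ccls_eq; rewrite Ev; auto).
      destruct (H v) as [_ Q].
      * split; [split; [auto| apply psat_emb; rewrite Ev; auto]|].
        intros u [_ Pu] [Bu _]. exfalso. apply psat_emb in Pu. apply (Mv u Pu Bu).
      * apply psat_emb in Q. rewrite Ev in Q. auto.
    + intros H v [[Cv Pv] Mv]. split; [auto|].
      apply psat_emb in Pv. apply psat_emb.
      pose proof (w_mcs v) as Hv. pose proof (ccls_blk _ _ Cv) as Bv.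
      assert (S : sel (w v) phi).
      { apply NNPP; intro N.
        destruct (nonmin v phi (conj Pv N)) as [u [Pu [Bu [B1 B2]]]].
        assert (Eu : ext ccls cVal (ccls s) phi u).
        { split. rewrite <- Cv. apply ccls_eq; auto. apply psat_emb; auto. }
        destruct (Mv u Eu (conj B1 B2)) as [B3 _]. apply B2; auto. }
      apply S. apply Bv; auto.
  - split.
    + intro H. apply NNPP; intro N.
      assert (C : cons (add (fun b => w s (TB b)) (TNeg a))).
      { apply cons_notder. intro D; apply N. apply B_der; auto. }
      destruct (lindenbaum _ C) as [y [Hsub Hy]].
      assert (R : cRel s (copy y Hy)) by (intros b Hb; apply Hsub; right; auto).
      apply H in R. apply IHa in R. simpl in R.
      apply (proj1 (mcs_neg y Hy _) (Hsub _ (or_introl eq_refl))); auto.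
    + intros H t R. apply IHa. apply R; auto.
Qed.

Theorem theorem5 (Phi : tform -> Prop) (a : tform) :
  entails Phi a -> derivable Phi a.
Proof.
  intro E. apply NNPP; intro N. apply cons_notder in N.
  destruct (lindenbaum _ N) as [x [Hsub Hx]].
  set (s := copy x Hx).
  assert (Ha : tsat CM s a).
  { apply E. intros b Hb. apply truth. simpl. apply Hsub; right; auto. }
  apply truth in Ha. simpl in Ha.
  apply (proj1 (mcs_neg x Hx _) (Hsub _ (or_introl eq_refl))); auto.
Qed.
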